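(* Let $\Lambda$ be a row-finite $k$-graph with no sources. Suppose $\Lambda$ has no local periodicity at $u\in\Lambda^0$ and that $v\in\Lambda^0$ satisfies $v\le u$. Then $\Lambda$ has no local periodicity at $v$.
   Context: A $k$-graph is a countable category $\Lambda$ with a functor $d:\Lambda\to\mathbb{N}^k$ satisfying the factorization property: whenever $d(\lambda)=m+n$ there are unique $\mu,\nu$ with $\lambda=\mu\nu$, $d(\mu)=m$, $d(\nu)=n$. $\Lambda^n=d^{-1}(n)$, $\Lambda^0$ the vertices, $r,s$ range and source, $v\Lambda=\{\lambda: r(\lambda)=v\}$, $v\Lambda w=\{\lambda: r(\lambda)=v,s(\lambda)=w\}$. Row-finite: each $v\Lambda^n$ finite; no sources: $v\Lambda^{e_i}\ne\emptyset$ for all $v,i$. Write $v\le u$ iff $v\Lambda u\neq\emptyset$. For $0\le m\le n\le d(\lambda)$, $\lambda(m,n)$ is the unique path with $\lambda=\lambda'\lambda(m,n)\lambda''$, $d(\lambda')=m$, $d(\lambda(m,n))=n-m$. $\Lambda$ has no local periodicity at $v$ if for each $m\neq n\in\mathbb{N}^k$ there is $\lambda\in v\Lambda$ with $d(\lambda)\ge m\vee n$ and $\lambda(m,m+d(\lambda)-(m\vee n))\neq\lambda(n,n+d(\lambda)-(m\vee n))$ ($\vee$ = coordinatewise max). *)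

(* Defs.v *)
From Stdlib Require List.
From mathcomp Require Import all_boot.
Set Implicit Arguments. Unset Strict Implicit. Unset Printing Implicit Defensive.

Definition deg (k : nat) := {ffun 'I_k -> nat}.
Definition dzero k : deg k := [ffun _ => 0].
Definition dadd k (m n : deg k) : deg k := [ffun i => m i + n i].
Definition dsub k (m n : deg k) : deg k := [ffun i => m i - n i].
Definition djoin k (m n : deg k) : deg k := [ffun i => maxn (m i) (n i)].
Definition dle k (m n : deg k) : Prop := forall i, m i <= n i.
Definition dbasis k (i : 'I_k) : deg k := [ffun j => (j == i : nat)].

(* A k-graph: a countable category (objects = vertices, morphisms = paths,
   composition [comp mu nu] = "mu nu", meaningful when [s mu = r nu])
   together with a degree functor d : Lambda -> N^k with the unique
   factorization property. *)
Record kgraph (k : nat) := KGraph {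
  Obj : Type;
  Mor : Type;
  rg : Mor -> Obj;
  sc : Mor -> Obj;
  idm : Obj -> Mor;
  comp : Mor -> Mor -> Mor;
  dg : Mor -> deg k;
  Obj_countable : exists f : Obj -> nat, injective f;
  Mor_countable : exists f : Mor -> nat, injective f;
  rg_idm : forall v, rg (idm v) = v;
  sc_idm : forall v, sc (idm v) = v;
  rg_comp : forall mu nu, sc mu = rg nu -> rg (comp mu nu) = rg mu;
  sc_comp : forall mu nu, sc mu = rg nu -> sc (comp mu nu) = sc nu;
  comp_idl : forall mu, comp (idm (rg mu)) mu = mu;
  comp_idr : forall mu, comp mu (idm (sc mu)) = mu;
  compA : forall la mu nu, sc la = rg mu -> sc mu = rg nu ->
            comp la (comp mu nu) = comp (comp la mu) nu;
  dg_idm : forall v, dg (idm v) = dzero k;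
  dg_comp : forall mu nu, sc mu = rg nu -> dg (comp mu nu) = dadd (dg mu) (dg nu);
  factorization : forall la m n, dg la = dadd m n ->
    exists mu nu, [/\ sc mu = rg nu, comp mu nu = la, dg mu = m & dg nu = n] /\
      forall mu' nu', sc mu' = rg nu' -> comp mu' nu' = la ->
        dg mu' = m -> dg nu' = n -> mu' = mu /\ nu' = nu
}.

Section Defs.
Variables (k : nat) (L : kgraph k).

Definition row_finite : Prop :=
  forall (v : Obj L) (n : deg k), exists s : seq (Mor L),
    forall la, rg la = v -> dg la = n -> List.In la s.

Definition no_sources : Prop :=
  forall (v : Obj L) (i : 'I_k), exists la : Mor L, rg la = v /\ dg la = dbasis i.

Definition vle (v u : Obj L) : Prop := exists la : Mor L, rg la = v /\ sc la = u.

(* [segment la m n mid] : mid = la(m,n), i.e. la = la' mid la'' with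
   d(la') = m and d(mid) = n - m (for 0 <= m <= n <= d(la)). *)
Definition segment (la : Mor L) (m n : deg k) (mid : Mor L) : Prop :=
  exists la' la'', [/\ sc la' = rg mid, sc mid = rg la'',
    la = comp (comp la' mid) la'', dg la' = m & dg mid = dsub n m].

Definition no_local_periodicity (v : Obj L) : Prop :=
  forall m n : deg k, m <> n ->
    exists la : Mor L, [/\ rg la = v, dle (djoin m n) (dg la) &
      exists a b,
        [/\ segment la m (dadd m (dsub (dg la) (djoin m n))) a,
            segment la n (dadd n (dsub (dg la) (djoin m n))) b & a <> b]].

End Defs.

(* Main.v *)
Require Import Defs.
From mathcomp Require Import all_boot.
From mathcomp Require Import zify.
Set Implicit Arguments.
Unset Strict Implicit.

Lemma seg_ext (k : nat) (L : kgraph k) (mu la a : Mor L) (m q : deg k) :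
  sc mu = rg la -> segment la m q a ->
  exists c2 la' la'' : Mor L, [/\ sc c2 = rg a, dg c2 = dg mu,
     sc la' = rg (Defs.comp c2 a), sc (Defs.comp c2 a) = rg la'' &
     [/\ Defs.comp mu la = Defs.comp (Defs.comp la' (Defs.comp c2 a)) la'', dg la' = m &
         dg a = dsub q m]].
Proof.
move=> Hml [a' [a'' [H1 H2 Hla Hd1 Hd2]]].
have Hra : rg a' = rg la.
  by rewrite Hla rg_comp ?rg_comp // sc_comp.
have Hma : sc mu = rg a' by rewrite Hra.
have Hdeg : dg (Defs.comp mu a') = dadd m (dg mu).
  rewrite dg_comp //; apply/ffunP => i; rewrite !ffunE Hd1 addnC //.
have [c1 [c2 [[Hc Hcc Hd1' Hd2'] _]]] := factorization Hdeg.
have Hsc2 : sc c2 = rg a by rewrite -H1 -(sc_comp Hma) -Hcc sc_comp.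
exists c2, c1, a''; split => //.
- by rewrite rg_comp.
- by rewrite sc_comp.
split => //.
rewrite Hla.
have Hma2 : sc mu = rg (Defs.comp a' a) by rewrite rg_comp.
rewrite (Defs.compA Hma2); last by rewrite sc_comp.
rewrite (Defs.compA Hma H1) -Hcc -(Defs.compA Hc Hsc2) //.
Qed.

Theorem lemma3p6 (k : nat) (L : kgraph k) (u v : Obj L) :
  row_finite L -> no_sources L ->
  no_local_periodicity u -> vle v u ->
  no_local_periodicity v.
Proof.
move=> _ _ Hu [mu [Hrv Hsu]] m n Hmn.
have [la [Hr Hle [a [b [Sa Sb Hab]]]]] := Hu m n Hmn.
have Hml : sc mu = rg la by rewrite Hsu Hr.
have [c2 [la' [la'' [Hc2 Hdc2 Hs1 Hs2 [Heq Hd' Hda]]]]] := seg_ext Hml Sa.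
have [e2 [lb' [lb'' [He2 Hde2 Hs1' Hs2' [Heq' Hd'' Hdb]]]]] := seg_ext Hml Sb.
exists (Defs.comp mu la); split.
- by rewrite rg_comp.
- move=> i; rewrite dg_comp // ffunE; move: (Hle i); rewrite !ffunE; lia.
exists (Defs.comp c2 a), (Defs.comp e2 b); split.
- exists la', la''; split => //.
  rewrite dg_comp // Hdc2 Hda; apply/ffunP => i; rewrite !ffunE.
  rewrite dg_comp // !ffunE; move: (Hle i); rewrite !ffunE; lia.
- exists lb', lb''; split => //.
  rewrite dg_comp // Hde2 Hdb; apply/ffunP => i; rewrite !ffunE.
  rewrite dg_comp // !ffunE; move: (Hle i); rewrite !ffunE; lia.
- move=> Habe; apply: Hab.
  have Hdd : dg (Defs.comp c2 a) = dadd (dg mu) (dg a) by rewrite dg_comp // Hdc2.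
  have [x [y [_ Uniq]]] := factorization Hdd.
  have [_ ->] := Uniq c2 a Hc2 erefl Hdc2 erefl.
  have Hdab : dg b = dg a.
    rewrite Hda Hdb; apply/ffunP => i; rewrite !ffunE; move: (Hle i); rewrite !ffunE; lia.
  by have [_ ->] := Uniq e2 b He2 (esym Habe) Hde2 Hdab.
Qed.
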